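(* For every odd prime $p$, $$\sum_{k=0}^{p-1} (k+1)_{\frac{p-1}{2}}^2 \equiv -1 \pmod{p}.$$
   Context: $(a)_n = a(a+1)\cdots(a+n-1)$ denotes the rising factorial, with $(a)_0 = 1$. *)

(* Defs.v *)
From mathcomp Require Import all_boot all_order all_algebra.
Set Implicit Arguments. Unset Strict Implicit. Unset Printing Implicit Defensive.

Definition rising (a n : nat) : nat := \prod_(0 <= i < n) (a + i).

(* Main.v *)
Require Import Defs.
From mathcomp Require Import all_boot all_order all_algebra.
From mathcomp Require Import zify ring.
Import GRing.Theory.

Lemma rising_fact k m : rising k.+1 m * k`! = (k + m)`!.
Proof.
elim: m => [|m IH]; first by rewrite /rising big_geq // mul1n addn0.
rewrite /rising big_nat_recr //= -/(rising k.+1 m) mulnAC IH addnS factS.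
by rewrite mulnC addSn.
Qed.

Section Key.
Variable R : fieldType.
Variable n : nat.
Hypothesis hch : (n.*2.+1) \in [pchar R]%R.

Let p := n.*2.+1.
Let hp : prime p. Proof. exact: GRing.pcharf_prime hch. Qed.

Lemma natR0 m : (p %| m) -> (m%:R = 0 :> R)%R.
Proof. by rewrite (dvdn_pcharf hch) => /eqP. Qed.

Lemma natR_neq0 m : 0 < m < p -> (m%:R != 0 :> R)%R.
Proof.
move=> /andP[m0 mp]; rewrite -(dvdn_pcharf hch).
apply/negP => /dvdn_leq => /(_ m0); rewrite leqNgt mp.
by [].
Qed.

Lemma fact_neq0 m : m < p -> (m`!%:R != 0 :> R)%R.
Proof.
elim: m => [|m IH] hm; first by rewrite fact0 oner_neq0.
by rewrite factS natrM mulf_neq0 // ?IH ?natR_neq0 // ?(ltnW hm).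
Qed.

Lemma rising_ffact k : k <= n ->
  ((rising n.+1 k)%:R = (-1) ^+ k * (n ^_ k)%:R :> R)%R.
Proof.
elim: k => [|k IH] hk; first by rewrite /rising big_geq // ffactn0 expr0 mul1r.
rewrite /rising big_nat_recr //= -/(rising n.+1 k) natrM IH ?(ltnW hk) //.
rewrite ffactnSr natrM exprS.
have -> : ((n.+1 + k)%:R = - ((n - k)%N)%:R :> R)%R.
  apply/eqP; rewrite -addr_eq0 -natrD; apply/eqP/natR0.
  have -> : n.+1 + k + (n - k) = p by rewrite /p; lia.
  by [].
ring.
Qed.

Lemma term_small k : k <= n ->
  (((rising k.+1 n) ^ 2)%N%:R = ((n`! ^ 2 * 'C(n, k) ^ 2)%N)%:R :> R)%R.
Proof.
move=> hk.
have hD : (((k`! * (n - k)`!)%N)%:R ^+ 2 != 0 :> R)%R.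
  rewrite expf_neq0 // natrM mulf_neq0 // fact_neq0 // /p; lia.
apply: (mulIf hD).
have e1 : ((rising k.+1 n)%:R * ((k`! * (n - k)`!)%N)%:R
           = (-1) ^+ k * (n`! * n`!)%:R :> R)%R.
  rewrite natrM mulrA -natrM rising_fact addnC -rising_fact natrM.
  rewrite mulrAC rising_ffact // -[((-1) ^+ k * _ * _)%R]mulrA -natrM ffact_fact //.
  by rewrite natrM mulrA.
have e2 : ((n`! * 'C(n, k))%N%:R * ((k`! * (n - k)`!)%N)%:R
           = (n`! * n`!)%:R :> R)%R.
  by rewrite -natrM -mulnA bin_fact.
rewrite -expnMn natrX -exprMn e1 natrX -exprMn e2.
by rewrite exprMn exprAC expr2 mulN1r opprK expr1n mul1r.
Qed.

Lemma term_big k : n < k < p -> (((rising k.+1 n) ^ 2)%N%:R = 0 :> R)%R.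
Proof.
move=> /andP[h1 h2]; apply: natR0.
have hi : n.*2 - k < n by rewrite /p in h2 *; lia.
rewrite -mulnn.
suff H : p %| rising k.+1 n by exact: (dvdn_mull (rising k.+1 n) H).
rewrite /rising (@big_cat_nat _ _ _ (n.*2 - k) 0 n) ?(ltnW hi) //=.
rewrite [X in _ * X]big_ltn //=; apply: dvdn_mull; apply: dvdn_mulr.
have -> : k.+1 + (n.*2 - k) = p by rewrite /p in h2 *; lia.
by [].
Qed.

Lemma sum_nat : \sum_(i < n.+1) (n`! ^ 2 * 'C(n, i) ^ 2) = (n.*2)`!.
Proof.
rewrite -big_distrr /=.
have -> : \sum_(i < n.+1) 'C(n, i) ^ 2 = 'C(n + n, n).
  rewrite -binomial.Vandermonde; apply: eq_bigr => i _.
  by rewrite bin_sub ?mulnn // -ltnS.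
rewrite -addnn -(bin_fact (leq_addr n n)) addnK; lia.
Qed.

Lemma key : ((\sum_(0 <= k < p) (rising k.+1 n ^ 2))%N%:R = -1 :> R)%R.
Proof.
rewrite natr_sum (@big_cat_nat _ _ _ n.+1 0 p) //=; last by rewrite /p; lia.
rewrite [X in (_ + X)%R]big_nat_cond [X in (_ + X)%R]big1 ?addr0; last first.
  by move=> k /andP[/andP[h1 h2] _]; apply: term_big; rewrite h1 h2.
rewrite big_mkord.
under eq_bigr => i _ do rewrite (@term_small i (ltn_ord i)).
rewrite -natr_sum sum_nat.
have W : p %| (p.-1)`!.+1 by rewrite -Wilson // prime_gt1.
have := natR0 _ W; rewrite -addn1 natrD /p /= => /eqP.
by rewrite addr_eq0 => /eqP.
Qed.

End Key.

Theorem lemma2p9 (p : nat) :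
  prime p -> odd p ->
  ((\sum_(0 <= k < p) ((rising k.+1 p.-1./2) ^ 2)%N %:Z) = -1 %[mod p%:Z])%Z.
Proof.
move=> hp hodd.
set n := p.-1./2.
have hp2 : n.*2.+1 = p.
  have h := odd_double_half p.-1.
  have hpo : odd p.-1 = false.
    by move: hodd; rewrite -{1}(prednK (prime_gt0 hp)) /= => /negbTE.
  rewrite hpo add0n in h; rewrite /n -muln2 -[in RHS](prednK (prime_gt0 hp)).
  by rewrite muln2 h.
have hch : n.*2.+1 \in [pchar 'F_p]%R by rewrite hp2; exact: pchar_Fp.
have K := key _ _ hch; rewrite hp2 in K.
have D : p %| (\sum_(0 <= k < p) (rising k.+1 n ^ 2)).+1.
  rewrite (dvdn_pcharf (pchar_Fp hp)) -[(\sum_(0 <= k < p) _).+1]addn1 natrD K.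
  by rewrite addNr.
rewrite -(big_morph Posz PoszD (erefl (Posz 0))).
apply/eqP; rewrite eqz_mod_dvd opprK -PoszD addn1 dvdzE.
by rewrite absz_nat.
Qed.
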